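(* Let $D$ be an integral domain such that $D_M$ is a GCD domain for every maximal ideal $M$ of $D$, and suppose there is a family $\mathcal{F}$ of nonzero prime ideals of $D$ such that $D=\bigcap_{P\in\mathcal{F}}D_P$ with the intersection locally finite (every nonzero element of $D$ lies in only finitely many members of $\mathcal{F}$). If the ideal class group $Cl_d(D)$ (invertible fractional ideals modulo principal fractional ideals) is trivial, then $D$ is a GCD domain.
   Context: A GCD domain is an integral domain in which every pair of nonzero elements has a greatest common divisor, equivalently $aD\cap bD$ is principal for all nonzero $a,b$. *)

(* Defs.v *)
From HB Require Import structures.
From mathcomp Require Import all_boot all_order all_algebra.
From Stdlib Require List.
Set Implicit Arguments. Unset Strict Implicit. Unset Printing Implicit Defensive.
Import GRing.Theory.
Local Open Scope ring_scope.

Definition subs (T : Type) := T -> Prop.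

Section Defs.
Variable D : idomainType.
Local Notation K := {fraction D}.

Definition emb (d : D) : K := @FracField.tofrac D d.

Definition is_ideal (I : subs D) : Prop :=
  I 0 /\ (forall x y, I x -> I y -> I (x + y)) /\ (forall r x, I x -> I (r * x)).

Definition is_prime_ideal (P : subs D) : Prop :=
  is_ideal P /\ ~ P 1 /\ (forall a b, P (a * b) -> P a \/ P b).

Definition is_maximal_ideal (M : subs D) : Prop :=
  is_ideal M /\ ~ M 1 /\
  (forall J : subs D, is_ideal J -> (forall x, M x -> J x) -> J 1 \/ (forall x, J x -> M x)).

Definition nonzero_ideal (I : subs D) : Prop := exists2 x, I x & x != 0.

Definition Dsub : subs K := fun x => exists d : D, x = emb d.

Definition loc (P : subs D) : subs K :=
  fun x => exists a s : D, ~ P s /\ x = emb a / emb s.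

Definition dvd_in (T : comNzRingType) (S : subs T) (x y : T) : Prop :=
  exists2 z, S z & y = x * z.

Definition gcd_domain_on (T : comNzRingType) (S : subs T) : Prop :=
  forall a b, S a -> S b -> a != 0 -> b != 0 ->
  exists d, [/\ S d, dvd_in S d a, dvd_in S d b &
    forall c, S c -> dvd_in S c a -> dvd_in S c b -> dvd_in S c d].

Definition gcd_domain : Prop := gcd_domain_on (fun _ : D => True).

Definition locally_finite (F : subs (subs D)) : Prop :=
  forall x : D, x != 0 ->
  exists s : seq (subs D), forall P, F P -> P x ->
    exists2 Q, List.In Q s & (forall y, P y <-> Q y).

Definition fractional_ideal (I : subs K) : Prop :=
  [/\ I 0, (forall x y, I x -> I y -> I (x + y)),
      (forall (r : D) x, I x -> I (emb r * x)),
      (exists2 x, I x & x != 0) &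
      (exists2 d : D, d != 0 & forall x, I x -> Dsub (emb d * x))].

Definition ideal_prod (I J : subs K) : subs K :=
  fun x => exists s : seq (K * K),
    (forall p, List.In p s -> I p.1 /\ J p.2) /\
    x = \sum_(p <- s) (p.1 * p.2).

Definition invertible_frac (I : subs K) : Prop :=
  fractional_ideal I /\
  exists2 J, fractional_ideal J & forall x, ideal_prod I J x <-> Dsub x.

Definition principal_frac (I : subs K) : Prop :=
  exists a : K, forall x, I x <-> exists d : D, x = a * emb d.

Definition trivial_class_group : Prop :=
  forall I : subs K, invertible_frac I -> principal_frac I.

End Defs.

(* Main.v *)
Require Import Defs.
From HB Require Import structures.
From mathcomp Require Import all_boot all_order all_algebra.
From mathcomp Require Import boolp classical_sets.
From mathcomp Require Import ring.
Set Implicit Arguments. Unset Strict Implicit. Unset Printing Implicit Defensive.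
Import GRing.Theory.
Local Open Scope ring_scope.
Section S.
Variable D : idomainType.
Local Notation K := {fraction D}.
Lemma embD (x y : D) : emb (x + y) = emb x + emb y. Proof. exact: rmorphD. Qed.
Lemma embM (x y : D) : emb (x * y) = emb x * emb y. Proof. exact: rmorphM. Qed.
Lemma emb1 : emb (1 : D) = 1. Proof. exact: rmorph1. Qed.
Lemma emb0 : emb (0 : D) = 0. Proof. exact: rmorph0. Qed.
Lemma emb_inj (x y : D) : emb x = emb y -> x = y.
Proof. by move=> /eqP; rewrite /emb tofrac_eq => /eqP. Qed.
Lemma emb_neq0 (x : D) : x != 0 -> emb x != 0.
Proof. by rewrite /emb tofrac_eq0. Qed.

Lemma Dsub_emb (d : D) : Dsub (emb d). Proof. by exists d. Qed.
Lemma Dsub_add x y : Dsub x -> Dsub y -> Dsub (x + y :> K).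
Proof. by move=> [a ->] [b ->]; exists (a + b); rewrite embD. Qed.
Lemma Dsub_mul x y : Dsub x -> Dsub y -> Dsub (x * y :> K).
Proof. by move=> [a ->] [b ->]; exists (a * b); rewrite embM. Qed.

Lemma ideal0 (I : subs D) : is_ideal I -> I 0. Proof. by case. Qed.
Lemma idealD (I : subs D) x y : is_ideal I -> I x -> I y -> I (x + y).
Proof. by case=> _ [h _]; apply: h. Qed.
Lemma idealM (I : subs D) r x : is_ideal I -> I x -> I (r * x).
Proof. by case=> _ [_ h]; apply: h. Qed.

Lemma max_prime (M : subs D) : is_maximal_ideal M -> is_prime_ideal M.
Proof.
move=> [iM [n1 mx]]; split=> //; split=> // a b Mab.
have [Ma|Ma] := pselect (M a); first by left.
right.
pose J : subs D := fun x => exists m r, M m /\ x = m + r * a.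
have iJ : is_ideal J.
  split; first by exists 0, 0; rewrite mul0r addr0; split=> //; apply: ideal0.
  split.
    move=> x y [m [r [Mm ->]]] [m' [r' [Mm' ->]]].
    exists (m + m'), (r + r'); split; first exact: idealD.
    ring.
  move=> r0 x [m [r [Mm ->]]]; exists (r0 * m), (r0 * r); split; first exact: idealM.
  by ring.
have MJ : forall x, M x -> J x.
  by move=> x Mx; exists x, 0; rewrite mul0r addr0.
case: (mx J iJ MJ) => [[m [r [Mm e1]]]|JM]; last first.
  by exfalso; apply: Ma; apply: JM; exists 0, 1; rewrite mul1r add0r; split=> //; apply: ideal0.
have -> : b = b * m + r * (a * b).
  by rewrite -[b in LHS]mulr1 e1; ring.
apply: idealD => //; last exact: idealM iM Mab.
exact: idealM iM Mm.
Qed.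

Lemma prime_mul (P : subs D) x y : is_prime_ideal P -> ~ P x -> ~ P y -> ~ P (x * y).
Proof. by move=> [_ [_ h]] nx ny /h [] //. Qed.

Lemma prime_neq0 (P : subs D) x : is_prime_ideal P -> ~ P x -> x != 0.
Proof. move=> [iP _] nx; apply/eqP => x0; apply: nx; rewrite x0; exact: ideal0. Qed.

Lemma loc_emb (P : subs D) d : is_prime_ideal P -> loc P (emb d).
Proof. by move=> [_ [n1 _]]; exists d, 1; split=> //; rewrite emb1 divr1. Qed.

Lemma loc_frac (P : subs D) a s : ~ P s -> loc P (emb a / emb s).
Proof. by move=> ns; exists a, s. Qed.

Lemma loc_add (P : subs D) x y : is_prime_ideal P -> loc P x -> loc P y -> loc P (x + y).
Proof.
move=> pP [a [s [ns ->]]] [b [t [nt ->]]].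
exists (a * t + b * s), (s * t); split; first exact: prime_mul.
have s0 := emb_neq0 (prime_neq0 pP ns); have t0 := emb_neq0 (prime_neq0 pP nt).
by rewrite embD !embM addf_div.
Qed.

Lemma loc_mul (P : subs D) x y : is_prime_ideal P -> loc P x -> loc P y -> loc P (x * y).
Proof.
move=> pP [a [s [ns ->]]] [b [t [nt ->]]].
exists (a * b), (s * t); split; first exact: prime_mul.
by rewrite !embM mulf_div.
Qed.

Lemma loc_Dsub (P : subs D) x : is_prime_ideal P -> Dsub x -> loc P x.
Proof. by move=> pP [d ->]; apply: loc_emb. Qed.

Lemma loc_ext (P Q : subs D) x : (forall y, P y <-> Q y) -> loc P x -> loc Q x.
Proof. by move=> PQ [a [s [ns ->]]]; exists a, s; split=> // /PQ. Qed.

Lemma loc_sub (P M : subs D) x : (forall y, P y -> M y) -> loc M x -> loc P x.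
Proof. by move=> PM [a [s [ns ->]]]; exists a, s; split=> // /PM. Qed.

Lemma clear_denoms (P : subs D) (l : seq K) : is_prime_ideal P ->
  (forall z, List.In z l -> loc P z) ->
  exists w, ~ P w /\ forall z, List.In z l -> Dsub (emb w * z).
Proof.
move=> pP; elim: l => [|z l IH] H.
  by exists 1; split=> //; case: pP => _ [].
have [w [nw Hw]] := IH (fun z' h => H z' (or_intror h)).
have [a [s [ns ez]]] := H z (or_introl erefl).
exists (w * s); split; first exact: prime_mul.
move=> z' [<-|iz].
  exists (w * a); rewrite ez !embM -mulrA; congr (_ * _).
  by rewrite mulrC divfK // (emb_neq0 (prime_neq0 pP ns)).
by rewrite embM mulrAC; apply: Dsub_mul; [apply: Hw | apply: Dsub_emb].
Qed.

End S.


Lemma fid_lcm (F : fieldType) (g c c' s s' : F) : s != 0 -> s' != 0 ->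
  g * (c' / s') * (c * s') = g * (c / s) * (c' * s).
Proof. move=> s0 s'0; field; by rewrite s0 s'0. Qed.

Lemma fid_lcm2 (F : fieldType) (A B' m f S S' : F) : A != 0 -> f != 0 -> S != 0 -> S' != 0 -> B' != 0 ->
  A * (B' * m / f) / (A * (B' * S * S')) = m * f^-1 * (1 / (S * S')).
Proof. move=> *; field; repeat (apply/andP; split) => //. Qed.

Section G.
Variable D : idomainType.
Local Notation K := {fraction D}.

Lemma dvd_refl (S : subs K) x : S 1 -> dvd_in S x x.
Proof. by exists 1; rewrite ?mulr1. Qed.

Lemma dvd_trans (S : subs K) x y z : (forall u v, S u -> S v -> S (u * v)) ->
  dvd_in S x y -> dvd_in S y z -> dvd_in S x z.
Proof. by move=> Sm [k Sk ->] [k' Sk' ->]; exists (k * k'); [apply: Sm | rewrite mulrA]. Qed.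

Lemma dvd_neq0 (S : subs K) x y : dvd_in S x y -> y != 0 -> x != 0.
Proof. by move=> [k _ ->]; apply: contraNneq => ->; rewrite mul0r. Qed.

Lemma gcd_list (S : subs K) (Sm : forall u v, S u -> S v -> S (u * v)) (S1 : S 1)
  (G : gcd_domain_on S) (x0 : K) (l : seq K) : S x0 -> x0 != 0 ->
  (forall z, List.In z l -> S z /\ z != 0) ->
  exists g, [/\ S g, g != 0, dvd_in S g x0, (forall z, List.In z l -> dvd_in S g z) &
    forall c, S c -> dvd_in S c x0 -> (forall z, List.In z l -> dvd_in S c z) -> dvd_in S c g].
Proof.
move=> Sx0 x00; elim: l => [|z l IH] Hl.
  exists x0; split=> //; exact: dvd_refl.
have [g [Sg g0 gx0 gl gmax]] := IH (fun z' h => Hl z' (or_intror h)).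
have [Sz z0] := Hl z (or_introl erefl).
have [d [Sd dg dz dmax]] := G g z Sg Sz g0 z0.
exists d; split=> //.
- exact: dvd_neq0 dg g0.
- exact: dvd_trans dg gx0.
- by move=> z' [<-|h] //; apply: dvd_trans dg (gl z' h).
- move=> c Sc cx0 cl; apply: dmax => //; last by apply: cl; left.
  by apply: gmax => // z' h; apply: cl; right.
Qed.

End G.


Section L.
Variable D : idomainType.
Local Notation K := {fraction D}.

Lemma inv_of_dvd1 (S : subs K) g f h : g != 0 -> S h -> g = g * f * h -> S f^-1.
Proof.
move=> g0 Sh e.
have e1 : f * h = 1 by apply: (mulfI g0); rewrite mulr1 mulrA -e.
have f0 : f != 0 by apply: contra_eq_neq e1 => ->; rewrite mul0r eq_sym oner_eq0.
by have -> : f^-1 = h by rewrite -[h](mulKf f0) e1 mulr1.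
Qed.

Lemma lcm_loc (M : subs D) (a b : D) : is_prime_ideal M -> gcd_domain_on (loc M) ->
  a != 0 -> b != 0 ->
  exists l, [/\ (exists u, l = a * u), (exists v, l = b * v), l != 0 &
    forall i, (exists u, i = a * u) -> (exists v, i = b * v) -> loc M (emb i / emb l)].
Proof.
move=> pM G a0 b0.
have Sm : forall u v, loc M u -> loc M v -> loc M (u * v) by move=> u v; apply: loc_mul.
have Sfr := @loc_frac D M.
have [g [Sg [a' Sa' ea] [b' Sb' eb] gmax]] :=
  G (emb a) (emb b) (loc_emb a pM) (loc_emb b pM) (emb_neq0 a0) (emb_neq0 b0).
have ea0 := emb_neq0 a0; have eb0 := emb_neq0 b0.
have g0 : g != 0 by apply: contraNneq ea0 => g0; rewrite ea g0 mul0r.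
have a'0 : a' != 0 by apply: contraNneq ea0 => h; rewrite ea h mulr0.
have b'0 : b' != 0 by apply: contraNneq eb0 => h; rewrite eb h mulr0.
have cop : forall f, loc M f -> dvd_in (loc M) f a' -> dvd_in (loc M) f b' -> loc M f^-1.
  move=> f Sf [k1 Sk1 e1] [k2 Sk2 e2].
  have [h Sh eh] : dvd_in (loc M) (g * f) g.
    apply: gmax; first exact: Sm.
      by exists k1 => //; rewrite ea e1 mulrA.
    by exists k2 => //; rewrite eb e2 mulrA.
  exact: inv_of_dvd1 g0 Sh eh.
case: Sb' => c [s [ns eb']].
case: Sa' => c' [s' [ns' ea']].
have s0 := emb_neq0 (prime_neq0 pM ns); have s'0 := emb_neq0 (prime_neq0 pM ns').
have c0 : c != 0 by apply: contraNneq b'0 => h; rewrite eb' h emb0 mul0r.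
exists (a * (c * s')); split.
- by exists (c * s').
- exists (c' * s); apply: emb_inj; rewrite !embM ea eb ea' eb'; exact: fid_lcm.
- by rewrite !mulf_neq0 // (prime_neq0 pM ns').
move=> i [u ->] [v e].
have [->|u0] := eqVneq u 0.
  by rewrite mulr0 emb0 mul0r; apply: loc_emb.
have eu0 := emb_neq0 u0.
have e' : a' * emb u = b' * emb v.
  apply: (mulfI g0); rewrite !mulrA -ea -eb -!embM e; done.
have au0 : a' * emb u != 0 by rewrite mulf_neq0.
have bu0 : b' * emb u != 0 by rewrite mulf_neq0.
have SU : loc M (emb u) := loc_emb u pM.
have [ee [See ea2 eb2 emax]] := G _ _ (Sm _ _ (ex_intro _ c' (ex_intro _ s' (conj ns' ea'))) SU)
   (Sm _ _ (ex_intro _ c (ex_intro _ s (conj ns eb'))) SU) au0 bu0.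
have Sa'' : loc M a' by exists c', s'.
have Sb'' : loc M b' by exists c, s.
have [m Sm' em] : dvd_in (loc M) b' ee.
  apply: emax => //; first by exists (emb v); [apply: loc_emb | rewrite e'].
  by exists (emb u).
have [f Sf ef] : dvd_in (loc M) (emb u) ee.
  by apply: emax => //; [exists a' | exists b']; rewrite // mulrC.
have ee0 : ee != 0 by apply: (dvd_neq0 ea2).
have f0 : f != 0 by apply: contraNneq ee0 => h; rewrite ef h mulr0.
have Sfi : loc M f^-1.
  apply: cop => //.
    case: ea2 => k Sk ek; exists k => //; apply: (mulfI eu0).
    by rewrite mulrA -ef -ek mulrC.
  case: eb2 => k Sk ek; exists k => //; apply: (mulfI eu0).
  by rewrite mulrA -ef -ek mulrC.
have eU : emb u = b' * m / f by rewrite -em ef mulfK.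
have ec : emb c = b' * emb s by rewrite eb' divfK.
rewrite !embM eU ec fid_lcm2 //.
apply: loc_mul => //; first exact: loc_mul.
rewrite -emb1 -embM; apply: Sfr; exact: prime_mul.
Qed.
End L.


Section Z.
Variable D : idomainType.

Lemma exists_max (B : subs D) : is_ideal B -> ~ B 1 ->
  exists M, is_maximal_ideal M /\ forall x, B x -> M x.
Proof.
move=> iB nB1.
pose P : set (set D) := fun I =>
  [/\ (forall x y, I x -> I y -> I (x + y)), (forall r x, I x -> I (r * x)), ~ I 1 &
     ((exists x, I x) -> forall x, B x -> I x)].
have [] := @Zorn_bigcup D P.
  move=> F FP Ftot; split.
  - move=> x y [X FX Xx] [Y FY Yy].
    have [XY|YX] := Ftot X Y FX FY.
      by exists Y => //; case: (FP Y FY) => h _ _ _; apply: h => //; apply: XY.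
    by exists X => //; case: (FP X FX) => h _ _ _; apply: h => //; apply: YX.
  - move=> r x [X FX Xx]; exists X => //; case: (FP X FX) => _ h _ _; exact: h.
  - by move=> [X FX X1]; case: (FP X FX) => _ _ h _.
  - move=> [x [X FX Xx]] y By; exists X => //; case: (FP X FX) => _ _ _ h.
    by apply: h => //; exists x.
move=> A [[Aadd Amul A1 AB] Amax].
have Bsub : forall x, B x -> A x.
  move=> x Bx; apply: AB Bx.
  apply: contrapT => nA.
  apply: (Amax B); last by split=> //; [move=> ??; apply: idealD | move=> ??; apply: idealM].
  split; first by move=> t At; exfalso; apply: nA; exists t.
  by move=> h; apply: nA; exists 0; apply: h; apply: ideal0.
have iA : is_ideal A.
  split; first by apply: Bsub; apply: ideal0.
  by split.

exists A; split=> //; split=> //; split=> // J iJ AJ.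
have [J1|nJ1] := pselect (J 1); first by left.
right; apply: contrapT => nJA.
apply: (Amax J); first by split.
split; [by move=> ??; apply: idealD | by move=> ??; apply: idealM | by [] |].
by move=> _ x Bx; apply: AJ; apply: Bsub.
Qed.
End Z.


Lemma fidC (F : fieldType) (A P S1 S2 W : F) : A * P != 0 ->
  A * (P * S1 * S2) * (W / (A * P)) = S1 * S2 * W.
Proof. rewrite mulf_eq0 negb_or => /andP[h1 h2]; field; by rewrite ?h1 ?h2. Qed.

Lemma in_smap (A B : Type) (f : A -> B) (l : seq A) (y : B) :
  List.In y (map f l) <-> exists x, f x = y /\ List.In x l.
Proof.
elim: l => [|x l IH] /=; first by split=> // [[x []]].
split.
  case=> [e|/IH [x' [e h]]]; first by exists x; split=> //; left.
  by exists x'; split=> //; right.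
by move=> [x' [e [e'|h]]]; [left; rewrite e' | right; apply/IH; exists x'].
Qed.

Section M.
Variable D : idomainType.
Local Notation K := {fraction D}.
Variable HlocGCD : forall M : subs D, is_maximal_ideal M -> gcd_domain_on (loc M).
Variable F : subs (subs D).
Variable HFprime : forall P, F P -> is_prime_ideal P /\ nonzero_ideal P.
Variable Hinter : forall x : K, Dsub x <-> (forall P, F P -> loc P x).
Variable Hlf : locally_finite F.
Variables a b : D.
Hypothesis a0 : a != 0.
Hypothesis b0 : b != 0.

Definition II (i : D) := (exists u, i = a * u) /\ (exists v, i = b * v).

Lemma lcm_F P : F P -> exists l, [/\ II l, l != 0 & forall i, II i -> loc P (emb i / emb l)].
Proof.
move=> FP; have [pP _] := HFprime FP.
have [M [mM PM]] : exists M, is_maximal_ideal M /\ forall x, P x -> M x.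
  by apply: exists_max; case: pP => [iP [n1 _]].
have [l [h1 h2 l0 hl]] := lcm_loc (max_prime mM) (HlocGCD mM) a0 b0.
exists l; split=> // i [hi1 hi2]; apply: (loc_sub PM); exact: hl.
Qed.

Lemma ab0 : a * b != 0. Proof. by rewrite mulf_neq0. Qed.

Lemma fin_gen : exists J1 : seq D, (forall j, List.In j J1 -> II j /\ j != 0) /\
  forall y : K, Dsub (y * emb (a * b)) -> (forall j, List.In j J1 -> Dsub (y * emb j)) ->
  forall i, II i -> Dsub (y * emb i).
Proof.
have [s Hs] := Hlf ab0.
have : forall s' : seq (subs D), exists J1 : seq D, (forall j, List.In j J1 -> II j /\ j != 0) /\
  forall Q, List.In Q s' -> (exists P, [/\ F P, P (a * b) & forall y, P y <-> Q y]) ->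
  exists l, List.In l J1 /\ forall i, II i -> loc Q (emb i / emb l).
  elim=> [|Q s' [J1 [HJ1 HQ1]]].
    by exists [::]; split=> // Q [].
  have [[P [FP Pab PQ]]|nP] := pselect (exists P, [/\ F P, P (a * b) & forall y, P y <-> Q y]).
    have [l [Il l0 hl]] := lcm_F FP.
    exists (l :: J1); split.
      by move=> j [<-|h]; [split | apply: HJ1].
    move=> Q' [<-|h] hP.
      by exists l; split; [left | move=> i Ii; apply: (loc_ext PQ); apply: hl].
    by have [l' [h1 h2]] := HQ1 Q' h hP; exists l'; split; [right|].
  exists J1; split=> // Q' [<-|h] hP; first by exfalso; apply: nP.
  exact: HQ1.
move=> /(_ s) [J1 [HJ1 HQ]]; exists J1; split=> // y yab yJ i Ii.
apply/Hinter => P FP; have [pP _] := HFprime FP.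
have [Pab|nPab] := pselect (P (a * b)).
  have [Q iQ PQ] := Hs P FP Pab.
  have [l [il hl]] := HQ Q iQ (ex_intro _ P (And3 FP Pab PQ)).
  have [_ l0] := HJ1 l il.
  have -> : y * emb i = (y * emb l) * (emb i / emb l).
    by rewrite -mulrA (mulrC (emb l)) divfK // emb_neq0.
  apply: loc_mul => //; first by apply: loc_Dsub => //; apply: yJ.
  by apply: (loc_ext (Q := P)) (hl i Ii) => z; split => /PQ.
have -> : y * emb i = (y * emb (a * b)) * (emb i / emb (a * b)).
  by rewrite -mulrA (mulrC (emb (a * b))) divfK // emb_neq0 // ab0.
apply: loc_mul => //; first exact: loc_Dsub.
exact: loc_frac.
Qed.


Lemma main_local M : is_maximal_ideal M ->
  exists i (y : K) c, [/\ II i, (forall i', II i' -> Dsub (y * emb i')), emb c = emb i * y & ~ M c].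
Proof.
move=> mM; have pM := max_prime mM; have G := HlocGCD mM.
have [J1 [HJ1 HA]] := fin_gen.
have Sm : forall u v, loc M u -> loc M v -> loc M (u * v) by move=> u v; apply: loc_mul.
have S1 : loc M 1 by rewrite -emb1; apply: loc_emb.
have [g [Sg g0 gab gl gmax]] := gcd_list Sm S1 G (l := map (@emb D) J1) (loc_emb (a * b) pM)
  (emb_neq0 ab0) (fun z hz => match proj1 (in_smap _ _ _) hz with
     ex_intro j (conj ej ij) => conj (eq_ind _ (fun t => loc M t) (loc_emb j pM) _ ej)
        (eq_ind _ (fun t => t != 0) (emb_neq0 (proj2 (HJ1 j ij))) _ ej) end).
have divg : forall z, dvd_in (loc M) g z -> loc M (z / g).
  by move=> z [k Sk ->]; rewrite mulrC mulKf.
have [w [nw Hw]] := clear_denoms (l := map (fun z => z / g) (emb (a * b) :: map (@emb D) J1)) pM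
  (fun z hz => match proj1 (in_smap _ _ _) hz with
     ex_intro z' (conj ez iz) => eq_ind _ (fun t => loc M t)
       (divg z' (match iz with or_introl e => eq_ind _ (fun t => dvd_in (loc M) g t) gab _ e
                 | or_intror h => gl z' h end)) _ ez end).
pose y := emb w / g.
have yz : forall z, List.In z (emb (a * b) :: map (@emb D) J1) -> Dsub (y * z).
  move=> z hz; have -> : y * z = emb w * (z / g) by rewrite /y mulrAC -mulrA.
  by apply: Hw; apply/in_smap; exists z.
have yI : forall i', II i' -> Dsub (y * emb i').
  apply: HA; first by apply: yz; left.
  by move=> j hj; apply: yz; right; apply/in_smap; exists j.
have [p Sp gp] : dvd_in (loc M) (emb a) g.
  apply: gmax; first exact: loc_emb.
    by exists (emb b); [apply: loc_emb | rewrite embM].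
  move=> z /in_smap [j [<- ij]]; have [[[u ->] _] _] := HJ1 j ij.
  by exists (emb u); [apply: loc_emb | rewrite embM].
have [q Sq gq] : dvd_in (loc M) (emb b) g.
  apply: gmax; first exact: loc_emb.
    by exists (emb a); [apply: loc_emb | rewrite embM mulrC].
  move=> z /in_smap [j [<- ij]]; have [[_ [v ->]] _] := HJ1 j ij.
  by exists (emb v); [apply: loc_emb | rewrite embM].
case: Sp => p1 [s1 [ns1 ep]]; case: Sq => q1 [s2 [ns2 eq]].
have s10 := emb_neq0 (prime_neq0 pM ns1); have s20 := emb_neq0 (prime_neq0 pM ns2).
have ep1 : emb p1 = p * emb s1 by rewrite ep divfK.
have eq1 : emb q1 = q * emb s2 by rewrite eq divfK.
exists (a * (p1 * s2)), y, (s1 * s2 * w); split => //.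
- split; first by exists (p1 * s2).
  exists (q1 * s1); apply: emb_inj.
  rewrite !embM ep1 eq1 !mulrA -gp -gq; by rewrite mulrAC.
- rewrite !embM ep1 /y gp fidC //.
  by rewrite -gp.
- by apply: prime_mul => //; apply: prime_mul.
Qed.

End M.


Lemma big_dsub (D : idomainType) (IK JK : subs {fraction D}) (s : seq ({fraction D} * {fraction D})) :
  (forall p, List.In p s -> Dsub (p.1 * p.2)) -> Dsub (\sum_(p <- s) (p.1 * p.2)).
Proof.
elim: s => [|p s IH] H; first by rewrite big_nil; exists 0; rewrite emb0.
rewrite big_cons; apply: Dsub_add; first by apply: H; left.
by apply: IH => q h; apply: H; right.
Qed.

Unset Implicit Arguments.
Theorem mainTheorem19 (D : idomainType)
  (HlocGCD : forall M : subs D, is_maximal_ideal M -> gcd_domain_on (loc M))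
  (F : subs (subs D))
  (HFprime : forall P, F P -> is_prime_ideal P /\ nonzero_ideal P)
  (Hinter : forall x : {fraction D}, Dsub x <-> (forall P, F P -> loc P x))
  (Hlf : locally_finite F)
  (Hcl : trivial_class_group D) :
  gcd_domain D.
Proof.
move=> a b _ _ a0 b0.
have ab0 : a * b != 0 by rewrite mulf_neq0.
pose IK : subs {fraction D} := fun x => exists i, II a b i /\ x = emb i.
pose JK : subs {fraction D} := fun y => forall i, II a b i -> Dsub (y * emb i).
have Iab : II a b (a * b) by split; [exists b | exists a; rewrite mulrC].
have IIadd : forall x y, II a b x -> II a b y -> II a b (x + y).
  move=> x y [[u ->] [v ev]] [[u' ->] [v' ev']].
  by split; [exists (u + u'); rewrite mulrDr | exists (v + v'); rewrite mulrDr ev ev'].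
have IImul : forall r x, II a b x -> II a b (r * x).
  move=> r x [[u ->] [v ev]].
  by split; [exists (r * u); rewrite mulrCA | exists (r * v); rewrite ev mulrCA].
have II0 : II a b 0 by split; [exists 0 | exists 0]; rewrite mulr0.
have fIK : fractional_ideal IK.
  split.
  - by exists 0; rewrite emb0.
  - move=> x y [i [Ii ->]] [j [Ij ->]]; exists (i + j); split; [exact: IIadd | by rewrite embD].
  - move=> r x [i [Ii ->]]; exists (r * i); split; [exact: IImul | by rewrite embM].
  - by exists (emb (a * b)); [exists (a * b) | exact: emb_neq0].
  - exists 1; first exact: oner_neq0.
    by move=> x [i [_ ->]]; rewrite emb1 mul1r; apply: Dsub_emb.
have fJK : fractional_ideal JK.
  split.
  - by move=> i _; rewrite mul0r -emb0; apply: Dsub_emb.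
  - by move=> x y hx hy i Ii; rewrite mulrDl; apply: Dsub_add; [apply: hx | apply: hy].
  - by move=> r x hx i Ii; rewrite -mulrA; apply: Dsub_mul; [apply: Dsub_emb | apply: hx].
  - exists (emb a)^-1; last by rewrite invr_neq0 // emb_neq0.
    move=> i [[u ->] _]; exists u; rewrite embM mulKf //; exact: emb_neq0.
  - exists (a * b) => // x hx; rewrite mulrC; exact: hx.
pose Bs : subs D := fun c => ideal_prod IK JK (emb c).
have iB : is_ideal Bs.
  split; first by exists [::]; split=> //; rewrite big_nil emb0.
  split.
    move=> x y [s [Hs ex]] [t [Ht ey]]; exists (s ++ t); split.
      by move=> p hp; case: (List.in_app_or _ _ _ hp) => h; [apply: Hs | apply: Ht].
    by rewrite embD ex ey big_cat.
  move=> r x [s [Hs ex]].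
  exists (map (fun p => (emb r * p.1, p.2)) s); split.
    move=> p /in_smap [q [<- hq]] /=; have [[i [Ii ->]] Jq] := Hs q hq.
    by split=> //; exists (r * i); split; [exact: IImul | rewrite embM].
  rewrite embM ex big_map mulr_sumr; apply: eq_bigr => p _ /=; exact: mulrA.
have B1 : Bs 1.
  apply: contrapT => nB1.
  have [M [mM BM]] := exists_max iB nB1.
  have [i [y [c [Ii yJ ec nMc]]]] := main_local HlocGCD HFprime Hinter Hlf a0 b0 mM.
  apply: nMc; apply: BM; exists [:: (emb i, y)]; split.
    by move=> p [<-|[]]; split=> //; exists i.
  by rewrite big_cons big_nil addr0.
have invI : invertible_frac IK.
  split=> //; exists JK => // x; split.
    move=> [s [Hs ->]]; apply: big_dsub => // p hp.
    have [[i [Ii ->]] Jp] := Hs p hp; rewrite mulrC; exact: Jp.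
  move=> [d ->]; have Bd : Bs (d * 1) := idealM d iB B1.
  by rewrite mulr1 in Bd.
have [al Hal] := Hcl IK invI.
have [l [Il el]] : IK al by apply/Hal; exists 1; rewrite emb1 mulr1.
have prin : forall x, II a b x -> exists d, x = l * d.
  move=> x Ix; have /Hal [d ed] : IK (emb x) by exists x.
  by exists d; apply: emb_inj; rewrite embM -el.
have [d0 ed0] := prin _ Iab.
have l0 : l != 0 by apply: contraNneq ab0 => l0; rewrite ed0 l0 mul0r.
have [[u eu] [v ev]] := Il.
exists d0; split=> //.
- exists v => //; apply: (mulfI b0); rewrite mulrCA -ev (mulrC d0) -ed0 mulrC //.
- exists u => //; apply: (mulfI a0); rewrite mulrCA -eu (mulrC d0) -ed0 //.
- move=> c _ [a1 _ ea] [b1 _ eb].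
  have Im : II a b (c * a1 * b1).
    by split; [exists b1; rewrite ea | exists a1; rewrite eb mulrAC].
  have [h eh] := prin _ Im.
  exists h => //; apply: (mulfI l0).
  rewrite -ed0 mulrCA -eh {1}ea {1}eb; by rewrite !mulrA (mulrAC c a1 c).
Qed.
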